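(* Let $S$ be an integral domain of characteristic zero, and let $R$ be a subring of $S$ such that $(\mathbb{Q}.R)\cap S=R$. Then every monic polynomial $f\in R[x]$ of degree at least $2$ that is indecomposable over $R$ is also indecomposable over $S$; equivalently, if a monic $f\in R[x]$ can be written as $f=G(H(x))$ with $G,H\in S[x]$ both of degree at least $2$, then $f=g(h(x))$ for some $g,h\in R[x]$ both of degree at least $2$.
   Context: For a ring $A$ and $f\in A[x]$ with $\deg f\ge 2$, $f$ is called decomposable over $A$ if $f(x)=g(h(x))$ for some $g,h\in A[x]$ of degree at least $2$, and indecomposable over $A$ otherwise. $\mathbb{Q}.R$ denotes the subring of the fraction field of $S$ generated by $\mathbb{Q}$ and $R$, i.e. the set of elements $r/n$ with $r\in R$ and $n$ a positive integer. *)

(* Defs.v *)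
From HB Require Import structures.
From mathcomp Require Import all_boot all_order all_algebra.
Set Implicit Arguments. Unset Strict Implicit. Unset Printing Implicit Defensive.
Import Order.TTheory GRing.Theory Num.Theory.
Local Open Scope ring_scope.

Definition is_subring (S : idomainType) (R : {pred S}) : Prop :=
  [/\ (1 : S) \in R,
      (forall x y, x \in R -> y \in R -> x - y \in R) &
      (forall x y, x \in R -> y \in R -> x * y \in R)].

Definition QdotR (S : idomainType) (R : {pred S}) (z : {fraction S}) : Prop :=
  exists r : S, exists n : nat,
    [/\ r \in R, (0 < n)%N & z = (@FracField.tofrac S r) / n%:R].

Definition QdotR_cap_S_eq_R (S : idomainType) (R : {pred S}) : Prop :=
  forall s : S, QdotR R (@FracField.tofrac S s) <-> s \in R.

Definition decomposable_over (S : idomainType) (A : {pred S}) (f : {poly S}) : Prop :=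
  exists g h : {poly S},
    [/\ g \is a polyOver A, h \is a polyOver A,
        (2 < size g)%N, (2 < size h)%N & f = g \Po h].

Definition indecomposable_over (S : idomainType) (A : {pred S}) (f : {poly S}) : Prop :=
  (2 < size f)%N /\ ~ decomposable_over A f.

(* Main.v *)
Require Import Defs.
From HB Require Import structures.
From mathcomp Require Import all_boot all_order all_algebra zify.
Import GRing.Theory.
Local Open Scope ring_scope.

Section Sec.
Variables (S : idomainType) (R : {pred S}) (hsub : is_subring R).
Definition Rp : {pred S} := R.
Lemma Rp_closed : GRing.subring_closed Rp.
Proof. by case: hsub => h1 hB hM; split. Qed.
HB.instance Definition _ := GRing.isSubringClosed.Build S Rp Rp_closed.

Lemma coefM_top (p q : {poly S}) a b : (size p <= a.+1)%N -> (size q <= b.+1)%N ->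
  (p * q)`_(a + b) = p`_a * q`_b.
Proof.
move=> /leq_sizeP hp /leq_sizeP hq.
have ha : (a < (a+b).+1)%N by rewrite ltnS leq_addr.
rewrite coefM (bigD1 (Ordinal ha)) //= addKn big1 ?addr0 // => -[j hj] /= hne.
have [lt|gt] := ltnP j a.
  by rewrite hq ?mulr0 //; lia.
have : (a < j)%N by rewrite ltn_neqAle eq_sym gt andbT; apply: contra hne => /eqP e; apply/eqP/val_inj.
by move=> /hp ->; rewrite mul0r.
Qed.

Lemma compXn (q : {poly S}) d : 'X^d \Po q = q ^+ d.
Proof. by elim: d => [|d IH]; rewrite ?comp_polyC // !exprS comp_polyM comp_polyX IH. Qed.

Lemma compOver (H1 : {poly S}) : H1 \is monic -> (1 < size H1)%N ->
  H1 \is a polyOver Rp -> forall p, p \Po H1 \is a polyOver Rp -> p \is a polyOver Rp.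
Proof.
move=> mH sH RH p.
elim: {p}(size p) {-2}p (leqnn (size p)) => [|n IH] p sp hp.
  by move: sp; rewrite leqn0 size_poly_eq0 => /eqP ->; rewrite rpred0.
set d := (size p).-1; set c := lead_coef p; set k := (size H1).-1.
set p2 := p - c *: 'X^d.
have sp2 : (size p2 <= d)%N.
  apply/leq_sizeP => j hj; rewrite coefB coefZ coefXn.
  have [ejd|njd] := eqVneq j d.
    by rewrite ejd mulr1 subrr.
  rewrite mulr0 subr0 nth_default //.
  move: njd => /eqP njd; rewrite /d in hj njd; move: hj njd; case: (size p) => //= s; lia.
have hsplit : p = p2 + c *: 'X^d by rewrite /p2 subrK.
have mHd : H1 ^+ d \is monic by apply: monic_exp.
have sHd : (size (H1 ^+ d)).-1 = (k * d)%N by rewrite size_exp.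
have hc : c \in Rp.
  have : (p \Po H1)`_(k * d) \in Rp by move/polyOverP: hp.
  rewrite {1}hsplit comp_polyD comp_polyZ compXn coefD coefZ.
  have -> : (H1 ^+ d)`_(k * d) = 1 by rewrite -sHd -lead_coefE; apply/monicP.
  rewrite mulr1 (_ : (p2 \Po H1)`_(k * d) = 0) ?add0r //.
  have [->|nz2] := eqVneq p2 0; first by rewrite comp_poly0 coef0.
  apply: nth_default; apply: leq_trans (size_comp_poly_leq _ _) _.
  have : (0 < size p2)%N by rewrite size_poly_gt0.
  move=> s0; have d1 : (1 <= d)%N by apply: leq_trans s0 sp2.
  have k1 : (1 <= k)%N by rewrite /k; lia.
  have := leq_mul (leqnn k) (leq_pred (size p2)); have := leq_mul (leqnn k) sp2.
  rewrite /k; clearbody d; move: k1; rewrite /k; nia.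
have h2 : p2 \Po H1 \is a polyOver Rp.
  have -> : p2 \Po H1 = p \Po H1 - c *: H1 ^+ d.
    by rewrite /p2 comp_polyB comp_polyZ compXn.
  by rewrite rpredB // polyOverZ // rpredX.
have := IH p2; rewrite (leq_trans sp2) ?h2 //; last by move: sp; rewrite /d; lia.
by move=> /(_ isT isT) P2; rewrite hsplit rpredD // polyOverZ // polyOverXn.
Qed.

Lemma divm (hchar : [pchar S] =i pred0) (hQR : QdotR_cap_S_eq_R R) x n :
  (0 < n)%N -> x * n%:R \in Rp -> x \in Rp.
Proof.
move=> n0 hx; apply/hQR; exists (x * n%:R), n; split => //.
have nz : (n%:R : {fraction S}) != 0.
  rewrite -(rmorph_nat (@FracField.tofrac S)) tofrac_eq0.
  by move/pcharf0P: hchar => ->; rewrite -lt0n.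
by rewrite rmorphM rmorph_nat mulfK.
Qed.

Lemma H_over (hchar : [pchar S] =i pred0) (hQR : QdotR_cap_S_eq_R R) (f G1 H1 : {poly S}) :
  f \is a polyOver Rp -> f = G1 \Po H1 -> H1 \is monic -> G1 \is monic ->
  H1`_0 = 0 -> (2 < size G1)%N -> (2 < size H1)%N -> H1 \is a polyOver Rp.
Proof.
move=> hf fE mH mG H0 sG sH.
set k := (size H1).-1; set m := (size G1).-1.
have sHk : size H1 = k.+1 by rewrite /k; lia.
have sGm : size G1 = m.+1 by rewrite /m; lia.
have key : forall j, (j < k)%N -> forall i, (k - j <= i)%N -> H1`_i \in Rp.
  elim=> [_|j IH jk] i hi.
    have [eik|nik] := eqVneq i k.
      by rewrite eik (_ : H1`_k = 1) ?rpred1 //; move/monicP: mH; rewrite lead_coefE sHk.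
    by rewrite nth_default ?rpred0 // sHk; move/eqP: nik; move: hi; clear; lia.
  have [hi2|hi2] := leqP (k - j) i; first by apply: IH => //; lia.
  have ia : i = (k - j.+1)%N by lia.
  set a := (k - j.+1)%N in ia.
  have a1 : (1 <= a)%N by rewrite /a; lia.
  have ak : (a < k)%N by rewrite /a; lia.
  rewrite ia.
  set D := take_poly a.+1 H1; set P := H1 - D.
  have PR : P \is a polyOver Rp.
    apply/polyOverP => l; rewrite coefB coef_take_poly.
    case: ifP => hl; first by rewrite subrr rpred0.
    by rewrite subr0; apply: IH; [lia | move/negbT: hl; rewrite /a; lia].
  have sD : (size D <= a.+1)%N by apply: size_take_poly.
  have Pk : P`_k = 1.
    rewrite coefB coef_take_poly ltnNge ak /= subr0.
    by move/monicP: mH; rewrite lead_coefE sHk.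
  have sP : size P = k.+1.
    apply/eqP; rewrite eqn_leq; apply/andP; split.
      apply/leq_sizeP => l hl; rewrite coefB coef_take_poly.
      have -> : (l < a.+1)%N = false by apply/negbTE; rewrite -leqNgt; lia.
      by rewrite subr0 nth_default // sHk.
    rewrite ltnNge; apply/negP => /leq_sizeP /(_ k (leqnn k)); rewrite Pk.
    by move/eqP; rewrite oner_eq0.
  have mP : P \is monic by apply/monicP; rewrite lead_coefE sP.
  have sX : forall (p : {poly S}) e, p \is monic -> size p = k.+1 -> size (p ^+ e) = (k * e).+1.
    move=> p e mp sp.
    by rewrite -[LHS]prednK ?size_poly_gt0 ?monic_neq0 ?monic_exp // size_exp sp.
  set G2 := G1 - 'X^m.
  have sG2 : (size G2 <= m)%N.
    apply/leq_sizeP => l hl; rewrite coefB coefXn.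
    have [->|nlm] := eqVneq l m.
      by move/monicP: mG; rewrite lead_coefE sGm /= => ->; rewrite subrr.
    rewrite subr0 nth_default // sGm; move/eqP: nlm; move: hl; clear; lia.
  have fE2 : f = G2 \Po H1 + H1 ^+ m by rewrite fE /G2 comp_polyB compXn subrK.
  set b := (k * m.-1)%N.
  have fN : f`_(a + b) = (H1 ^+ m)`_(a + b).
    rewrite fE2 coefD (_ : (G2 \Po H1)`_(a+b) = 0) ?add0r //.
    have [->|nz] := eqVneq G2 0; first by rewrite comp_poly0 coef0.
    apply: nth_default; apply: leq_trans (size_comp_poly_leq _ _) _.
    rewrite -/k.
    have h1 : ((size G2).-1 <= m.-1)%N by rewrite -!subn1 leq_sub2r.
    have := leq_mul h1 (leqnn k); rewrite /b; nia.
  set Q := \sum_(i < m) H1 ^+ (m.-1 - i) * P ^+ i.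
  have XX : H1 ^+ m = P ^+ m + D * Q.
    have := subrXX H1 P m; rewrite -/Q (_ : H1 - P = D) => [<-|]; first by rewrite addrC subrK.
    by rewrite /P opprB addrC subrK.
  have term : forall t : 'I_m, size (H1 ^+ (m.-1 - t) * P ^+ t) = b.+1 /\
      (H1 ^+ (m.-1 - t) * P ^+ t)`_b = 1.
    move=> t.
    have mT : H1 ^+ (m.-1 - t) * P ^+ t \is monic by rewrite monicMl ?monic_exp.
    have sT : size (H1 ^+ (m.-1 - t) * P ^+ t) = b.+1.
      rewrite size_monicM ?monic_exp ?monic_neq0 ?monic_exp // !sX // /b.
      have := ltn_ord t; clear; nia.
    by split => //; move/monicP: mT; rewrite lead_coefE sT.
  have Qb : Q`_b = m%:R.
    rewrite coef_sum (eq_bigr (fun _ => 1)); last by move=> t _; case: (term t).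
    by rewrite sumr_const card_ord.
  have sQ : (size Q <= b.+1)%N.
    apply/leq_sizeP => l hl; rewrite coef_sum big1 // => t _.
    by case: (term t) => st _; rewrite nth_default // st.
  have DQ : (D * Q)`_(a + b) = H1`_a * m%:R.
    by rewrite coefM_top // Qb coef_take_poly ltnSn.
  apply: (@divm hchar hQR _ m); first by rewrite /m; lia.
  rewrite -DQ (_ : (D * Q)`_(a + b) = f`_(a + b) - (P ^+ m)`_(a + b)).
    by rewrite rpredB //; [move/polyOverP: hf | apply/polyOverP; rewrite rpredX].
  by rewrite fN XX coefD addrC addKr.
have : H1 \is a polyOver Rp.
  apply/polyOverP => i; have [->|i0] := eqVneq i 0%N; first by rewrite H0 rpred0.
  by apply: (key k.-1); lia.
done.
Qed.
End Sec.

Theorem corollary2p2 (S : idomainType) (R : {pred S})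
  (hchar : [pchar S] =i pred0)
  (hsub : is_subring R)
  (hQR : QdotR_cap_S_eq_R R)
  (f : {poly S})
  (hfR : f \is a polyOver R) (hmon : f \is monic) (hdeg : (2 < size f)%N) :
  indecomposable_over R f -> indecomposable_over (@predT S) f.
Proof.
move=> [_ hind]; split => //; move=> [G [H [_ _ sG sH fE]]]; apply: hind.
set u := lead_coef H; set m := (size G).-1.
set v := lead_coef G * u ^+ m.-1.
have lf : lead_coef G * u ^+ m = 1.
  by move/monicP: hmon; rewrite fE lead_coef_comp //; apply: leq_trans sH.
have uv : v * u = 1 by rewrite /v -mulrA -exprSr prednK // /m; lia.
have v0 : v != 0 by apply/eqP => v0; move: uv; rewrite v0 mul0r => /eqP; rewrite eq_sym oner_eq0.
have u0 : u != 0 by apply/eqP => u0; move: uv; rewrite u0 mulr0 => /eqP; rewrite eq_sym oner_eq0.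
set c := H`_0.
set H1 := v *: (H - c%:P).
set L := u%:P * 'X + c%:P.
set G1 := G \Po L.
have sHc : (size (- c%:P) < size H)%N.
  by rewrite size_opp size_polyC; apply: leq_ltn_trans (leq_b1 _) _; apply: ltn_trans sH.
have LH : L \Po H1 = H.
  rewrite /L comp_polyD comp_polyM !comp_polyC comp_polyX mul_polyC /H1 scalerA mulrC uv.
  by rewrite scale1r subrK.
have fE1 : f = G1 \Po H1 by rewrite /G1 -comp_polyA LH.
have sL : size L = 2.
  by rewrite /L size_MXaddC polyC_eq0 (negbTE u0) /= size_polyC u0.
have sG1 : size G1 = size G by rewrite /G1 size_comp_poly2.
have sH1 : size H1 = size H by rewrite /H1 size_scale // size_polyDl.
have mH1 : H1 \is monic.
  by apply/monicP; rewrite /H1 lead_coefZ lead_coefDl // -/u uv.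
have H10 : H1`_0 = 0 by rewrite /H1 coefZ coefB coefC /= subrr mulr0.
have mG1 : G1 \is monic.
  apply/monicP; move/monicP: hmon; rewrite fE1 lead_coef_comp ?sH1; last by apply: leq_trans sH.
  by move/monicP: mH1 => ->; rewrite expr1n mulr1.
have hf : f \is a polyOver (@Rp S R) by [].
have RH1 : H1 \is a polyOver (@Rp S R).
  by apply: (@H_over S R hsub hchar hQR f G1 H1 hf fE1) => //; rewrite ?sG1 ?sH1.
have RG1 : G1 \is a polyOver (@Rp S R).
  apply: (@compOver S R hsub H1 mH1) => //; first by rewrite sH1; apply: ltn_trans sH.
  by rewrite -fE1.
by exists G1, H1; split => //; rewrite ?sG1 ?sH1.
Qed.
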